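(* Let $f\in\mathrm{Rat}_d(\mathbb{C}_v)$, $d\ge 2$, satisfy $|f(x)|>1$ for every $x\in\mathbb{C}_v$ with $|x|>1$. Then for every $\gamma>0$ there is an open subset $W\subseteq\mathrm{Rat}_d(\mathbb{C}_v)$ containing $f$ such that every $g\in W$ satisfies (a) $|g(x)|>1$ for all $x\in\mathbb{C}_v$ with $|x|>1$, and (b) $|g(x)-f(x)|<\gamma$ for all $x\in\mathbb{C}_v$ with $|f(x)|\le1$.
   Context: $\mathbb{C}_v$ is an algebraically closed field of characteristic zero, complete with respect to a nontrivial non-archimedean absolute value. $\mathrm{Rat}_d(\mathbb{C}_v)$ is the set of rational functions of degree exactly $d$ (degree of $F/G$ with $F,G$ coprime polynomials being $\max\{\deg F,\deg G\}$), topologized via the inclusion into $\mathbb{P}^{2d+1}(\mathbb{C}_v)$ sending $f$ to its tuple of $2d+2$ coefficients. *)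

(* Defs.v *)
(* an abstract model of C_v. *)
From HB Require Import structures.
From mathcomp Require Import all_boot all_order all_algebra.
From mathcomp Require Import reals.
Set Implicit Arguments. Unset Strict Implicit. Unset Printing Implicit Defensive.
Import Order.TTheory GRing.Theory Num.Theory.
Local Open Scope ring_scope.

Record complete_nonarch_abs (R : realType) (K : fieldType) (a : K -> R) : Prop := {
  abs_ge0 : forall x, 0 <= a x;
  abs_eq0 : forall x, a x = 0 <-> x = 0;
  abs_mul : forall x y, a (x * y) = a x * a y;
  abs_ultra : forall x y, a (x + y) <= Num.max (a x) (a y);
  abs_nontrivial : exists x, a x != 0 /\ a x != 1;
  abs_complete : forall u : nat -> K,
    (forall e : R, 0 < e -> exists N, forall m n, (N <= m)%N -> (N <= n)%N ->
        a (u m - u n) < e) ->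
    exists l, forall e : R, 0 < e -> exists N, forall n, (N <= n)%N -> a (u n - l) < e
}.

(* A rational function f = F/G is given by the pair (F, G) of polynomials,
   i.e. by its 2d+2 coefficients (a point of K^{2d+2} \ {0}).
   rat_deg d F G : F, G coprime and max(deg F, deg G) = d, i.e. f in Rat_d. *)
Definition rat_deg (K : fieldType) (d : nat) (F G : {poly K}) : Prop :=
  coprimep F G /\ maxn (size F) (size G) = d.+1.

(* |f(x)| > 1, with f(x) = infinity at a pole (G(x) = 0). *)
Definition rat_abs_gt1 (R : realType) (K : fieldType) (a : K -> R)
  (F G : {poly K}) (x : K) : Prop :=
  G.[x] = 0 \/ 1 < a (F.[x] / G.[x]).

Definition rat_abs_le1 (R : realType) (K : fieldType) (a : K -> R)
  (F G : {poly K}) (x : K) : Prop :=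
  G.[x] != 0 /\ a (F.[x] / G.[x]) <= 1.

Definition rat_close (R : realType) (K : fieldType) (a : K -> R) (gamma : R)
  (F G F' G' : {poly K}) (x : K) : Prop :=
  G'.[x] != 0 /\ a (F'.[x] / G'.[x] - F.[x] / G.[x]) < gamma.

(* W is (the preimage in K^{2d+2} \ {0} of) an open subset of P^{2d+1}(K):
   it is invariant under nonzero scaling of the coefficient vector, and it is
   open for the sup-norm topology on coefficient vectors of length 2d+2. *)
Definition proj_open (R : realType) (K : fieldType) (a : K -> R) (d : nat)
  (W : {poly K} -> {poly K} -> Prop) : Prop :=
  (forall (c : K) F G, c != 0 -> W F G -> W (c *: F) (c *: G)) /\
  (forall F G, W F G -> exists2 e : R, 0 < e &
     forall F' G' : {poly K}, (size F' <= d.+1)%N -> (size G' <= d.+1)%N ->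
       (forall i : 'I_d.+1, a (F'`_i - F`_i) < e /\ a (G'`_i - G`_i) < e) ->
       W F' G').

(* Main.v *)
Require Import Defs.
From HB Require Import structures.
From mathcomp Require Import all_boot all_order all_algebra.
From mathcomp Require Import reals.
From mathcomp Require Import ring lra.
Import Order.TTheory GRing.Theory Num.Theory.
Set Implicit Arguments. Unset Strict Implicit. Unset Printing Implicit Defensive.
Local Open Scope ring_scope.

Section Abs.
Variables (R : realType) (K : fieldType) (a : K -> R).
Hypothesis Ha : complete_nonarch_abs a.

Lemma a_ge0 x : 0 <= a x. Proof. have := abs_ge0 Ha x. exact. Qed.
Lemma a0 : a 0 = 0. Proof. by apply/(abs_eq0 Ha). Qed.
Lemma a_neq0 x : x != 0 -> 0 < a x.
Proof.
move=> x0; rewrite lt_def a_ge0 andbT; apply/eqP => /(abs_eq0 Ha) h.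
by rewrite h eqxx in x0.
Qed.
Lemma aM x y : a (x * y) = a x * a y. Proof. have := abs_mul Ha x y. exact. Qed.
Lemma a1 : a 1 = 1.
Proof.
have h0 : 0 < a 1 by apply: a_neq0; exact: oner_neq0.
have h := aM 1 1; rewrite mulr1 in h.
have : a 1 * (a 1 - 1) = 0 by rewrite mulrBr mulr1 -h subrr.
move/eqP; rewrite mulf_eq0 (gt_eqF h0) /= subr_eq0 => /eqP //.
Qed.
Lemma aN1 : a (-1) = 1.
Proof.
have h := aM (-1) (-1); rewrite mulrNN mulr1 a1 in h.
have hg := a_ge0 (-1).
have : (a (-1) - 1) * (a (-1) + 1) = 0 by rewrite -subr_sqr expr2 -h expr1n subrr.
move/eqP; rewrite mulf_eq0 => /orP [|]; first by rewrite subr_eq0 => /eqP.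
move=> /eqP h2; lra.
Qed.
Lemma aN x : a (- x) = a x.
Proof. by rewrite -mulN1r aM aN1 mul1r. Qed.
Lemma aV x : a (x^-1) = (a x)^-1.
Proof.
have [->|x0] := eqVneq x 0; first by rewrite invr0 a0 invr0.
have h := aM x x^-1; rewrite divff // a1 in h.
have hx := a_neq0 x0.
have hx0 : a x != 0 by rewrite gt_eqF.
apply: (mulfI hx0); by rewrite -h mulfV.
Qed.
Lemma aD x y : a (x / y) = a x / a y. Proof. by rewrite aM aV. Qed.
Lemma aX x n : a (x ^+ n) = a x ^+ n.
Proof. elim: n => [|n IH]; by rewrite ?expr0 ?a1 // !exprS aM IH. Qed.
Lemma aU x y : a (x + y) <= Num.max (a x) (a y). Proof. have := abs_ultra Ha x y. exact. Qed.
Lemma aB x y : a (x - y) <= Num.max (a x) (a y).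
Proof. by rewrite -(aN y) aU. Qed.
Lemma aD_lt x y B : a x < B -> a y < B -> a (x + y) < B.
Proof. move=> hx hy; apply: le_lt_trans (aU x y) _; by rewrite gt_max hx hy. Qed.
Lemma aD_le x y B : a x <= B -> a y <= B -> a (x + y) <= B.
Proof. move=> hx hy; apply: le_trans (aU x y) _; by rewrite ge_max hx hy. Qed.
Lemma a_stable u v : a (u - v) < a u -> a u <= a v.
Proof.
move=> h; have := aU (u - v) v; rewrite subrK.
case: (leP (a (u - v)) (a v)) => hc // h2.
by have := lt_le_trans h h2; rewrite ltxx.
Qed.
Lemma a_stable_le u v : a (u - v) < a u -> a v <= a u.
Proof.
move=> h; have := aU u (- (u - v)); rewrite aN opprB addrC subrK => h2.
by apply: le_trans h2 _; rewrite ge_max lexx ltW.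
Qed.
Lemma a_sum_lt n (f : 'I_n -> K) B : 0 < B -> (forall i, a (f i) < B) ->
  a (\sum_(i < n) f i) < B.
Proof.
elim: n f => [|n IH] f B0 hf; first by rewrite big_ord0 a0.
rewrite big_ord_recr /=; apply: aD_lt => //; exact: IH.
Qed.
Lemma a_sum_le n (f : 'I_n -> K) B : 0 <= B -> (forall i, a (f i) <= B) ->
  a (\sum_(i < n) f i) <= B.
Proof.
elim: n f => [|n IH] f B0 hf; first by rewrite big_ord0 a0.
rewrite big_ord_recr /=; apply: aD_le => //; exact: IH.
Qed.
Lemma a_prod (I : Type) (r : seq I) (f : I -> K) :
  a (\prod_(i <- r) f i) = \prod_(i <- r) a (f i).
Proof.
elim: r => [|x r IH]; first by rewrite !big_nil a1.
by rewrite !big_cons aM IH.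
Qed.
Lemma a_subl x z : a z < a x -> a (x - z) = a x.
Proof.
move=> h; apply/eqP; rewrite eq_le; apply/andP; split.
  by apply: le_trans (aB x z) _; rewrite ge_max lexx ltW.
apply: a_stable; by rewrite opprB addrC subrK.
Qed.
End Abs.

Section Poly.
Variables (R : realType) (K : closedFieldType) (a : K -> R).
Hypothesis Ha : complete_nonarch_abs a.

Lemma peval_lt n (P : {poly K}) x B : (size P <= n)%N -> 0 < B ->
  (forall i : 'I_n, a (P`_i) * a x ^+ i < B) -> a P.[x] < B.
Proof.
move=> hs B0 h; rewrite (horner_coef_wide x hs); apply: (a_sum_lt Ha) => // i.
by rewrite (aM Ha) (aX Ha).
Qed.

Lemma peval_le n (P : {poly K}) x B : (size P <= n)%N -> 0 <= B ->
  (forall i : 'I_n, a (P`_i) * a x ^+ i <= B) -> a P.[x] <= B.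
Proof.
move=> hs B0 h; rewrite (horner_coef_wide x hs); apply: (a_sum_le Ha) => // i.
by rewrite (aM Ha) (aX Ha).
Qed.

Lemma prod_large (r : seq K) x : (forall z, z \in r -> a z < a x) ->
  a (\prod_(z <- r) (x - z)) = a x ^+ size r.
Proof.
elim: r => [|z r IH] h; first by rewrite big_nil (a1 Ha).
rewrite big_cons (aM Ha) (a_subl Ha) ?h ?mem_head // IH ?exprS //.
by move=> w wr; apply: h; rewrite in_cons wr orbT.
Qed.

Lemma poly_abs_large (P : {poly K}) (r : seq K) c x Rb :
  P = c *: \prod_(z <- r) ('X - z%:P) -> (forall z, z \in r -> a z <= Rb) ->
  Rb < a x -> a P.[x] = a c * a x ^+ size r.
Proof.
move=> -> hr hx; rewrite hornerZ horner_prod (aM Ha).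
under eq_bigr do rewrite hornerXsubC.
rewrite prod_large // => z zr; exact: le_lt_trans (hr z zr) hx.
Qed.

Lemma foldmax_ge (r : seq K) z : z \in r -> a z <= foldr Num.max 1 (map a r).
Proof.
elim: r => [//|w r IH]; rewrite in_cons => /orP [/eqP ->|zr] /=.
  by rewrite le_max lexx.
by rewrite le_max IH ?orbT.
Qed.

Lemma foldmax_ge1 (r : seq K) : 1 <= foldr Num.max 1 (map a r).
Proof. elim: r => [//|w r IH] /=; by rewrite le_max IH orbT. Qed.

Lemma bernoulli_ge (h : R) n : 0 <= h -> 1 + n%:R * h <= (1 + h) ^+ n.
Proof.
move=> h0; elim: n => [|n IH]; first by rewrite mul0r addr0 expr0.
rewrite exprSr -natr1.
have hn : 0 <= n%:R :> R by rewrite ler0n.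
set X := (1 + h) ^+ n in IH *.
nra.
Qed.

Lemma exists_large B : exists x : K, B < a x.
Proof.
have [x0 [h1 h2]] := abs_nontrivial Ha.
have hx0 : x0 != 0 by apply: contraNneq h1 => ->; rewrite a0.
have [t ht] : exists t, 1 < a t.
  have [lt|gt] := ltP 1 (a x0); first by exists x0.
  exists x0^-1; rewrite (aV Ha).
  have p : 0 < a x0 by apply: a_neq0.
  rewrite invf_gt1 // lt_neqAle gt h2 //.
set h := a t - 1.
have h0 : 0 < h by rewrite subr_gt0.
set B' := Num.max B 0 / h.
have hB' : 0 <= B' by apply: divr_ge0; [rewrite le_max lexx orbT | exact: ltW].
have := archi_boundP hB'; set n := Num.Def.archi_bound B' => hn.
exists (t ^+ n); rewrite (aX Ha).
have := bernoulli_ge n (ltW h0); rewrite [1 + h]addrC /h subrK => hb.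
apply: lt_le_trans hb.
have : B' * h < n%:R * h by rewrite ltr_pM2r.
rewrite /B' divfK ?gt_eqF // => hh.
have : B <= Num.max B 0 by rewrite le_max lexx.
rewrite /h in hh.
lra.
Qed.

Lemma scale_div (c u v : K) : c != 0 -> (c * u) / (c * v) = u / v.
Proof. by move=> c0; rewrite invfM mulrACA divff // mul1r. Qed.

Lemma sum_ge_term n (f : 'I_n -> R) i : (forall j, 0 <= f j) -> f i <= \sum_(j < n) f j.
Proof. by move=> h; rewrite (bigD1 i) //= lerDl sumr_ge0. Qed.

End Poly.

From mathcomp Require Import zify.

Theorem lemma5p6 (R : realType) (K : closedFieldType) (a : K -> R)
  (Ha : complete_nonarch_abs a) (Hchar : [pchar K] =i pred0)
  (d : nat) (Hd : (2 <= d)%N) (F G : {poly K}) (Hf : rat_deg d F G)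
  (Hesc : forall x : K, 1 < a x -> rat_abs_gt1 a F G x) :
  forall gamma : R, 0 < gamma ->
  exists W : {poly K} -> {poly K} -> Prop,
    [/\ proj_open a d W, W F G &
      forall F' G', rat_deg d F' G' -> W F' G' ->
        (forall x : K, 1 < a x -> rat_abs_gt1 a F' G' x) /\
        (forall x : K, rat_abs_le1 a F G x -> rat_close a gamma F G F' G' x)].
Proof.
move=> gamma g0.
case: (Hf) => cop hmax.
have hFsz : (size F <= d.+1)%N by rewrite -hmax leq_maxl.
have hGsz : (size G <= d.+1)%N by rewrite -hmax leq_maxr.
have F0 : F != 0.
  apply/eqP => F0; move: cop; rewrite F0 coprime0p => /eqp_size.
  rewrite size_poly1 => hG; move: hmax; rewrite F0 size_poly0 hG; lia.
have lF0 : lead_coef F != 0 by rewrite lead_coef_eq0.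
case: (closed_field_poly_normal F) => rF hrF.
have hrFsz : size F = (size rF).+1 by rewrite {1}hrF size_scale // size_prod_XsubC.
have rF1 : forall z, z \in rF -> a z <= 1.
  move=> z zr; rewrite leNgt; apply/negP => hz.
  have rz : root F z by rewrite hrF rootZ // root_prod_XsubC.
  have := coprimep_root cop rz.
  case: (Hesc _ hz) => [->|]; first by rewrite eqxx.
  by rewrite (rootP rz) mul0r (a0 Ha) // ltNge ler01.
have Fbig : forall x, 1 < a x -> a F.[x] = a (lead_coef F) * a x ^+ size rF.
  move=> x hx; exact: (poly_abs_large Ha hrF rF1 hx).
have hsF : size F = d.+1.
  case: (ltnP (size F) d.+1) => hlt; last by apply/eqP; rewrite eqn_leq hFsz hlt.
  exfalso.
  have hG : size G = d.+1.
    case: (leqP (size F) (size G)) => hc; first by rewrite (maxn_idPr hc) in hmax.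
    by move: hmax; rewrite (maxn_idPl (ltnW hc)) => hm; rewrite hm ltnn in hlt.
  have G0 : G != 0 by rewrite -size_poly_eq0 hG.
  have lG0 : lead_coef G != 0 by rewrite lead_coef_eq0.
  case: (closed_field_poly_normal G) => rG hrG.
  have hrGsz : size G = (size rG).+1 by rewrite {1}hrG size_scale // size_prod_XsubC.
  set Rb := foldr Num.max 1 (map a rG).
  have Rb1 : 1 <= Rb := foldmax_ge1 a rG.
  have Gbig : forall x, Rb < a x -> a G.[x] = a (lead_coef G) * a x ^+ size rG.
    move=> x hx; exact: (poly_abs_large Ha hrG (@foldmax_ge _ _ a rG) hx).
  have pF := a_neq0 Ha lF0; have pG := a_neq0 Ha lG0.
  have [x hx] := exists_large Ha (Num.max Rb (a (lead_coef F) / a (lead_coef G))).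
  move: hx; rewrite gt_max => /andP [hx1 hx2].
  have hx1' : 1 < a x by apply: le_lt_trans Rb1 hx1.
  have hax : 0 < a x by apply: lt_trans hx1'.
  have eG := Gbig x hx1; have eF := Fbig x hx1'.
  have k_lt : (size rF < size rG)%N by lia.
  have hpow : a x ^+ (size rF).+1 <= a x ^+ size rG by rewrite ler_eXn2l.
  rewrite exprS in hpow.
  have pp : 0 < a x ^+ size rF by rewrite exprn_gt0.
  rewrite ltr_pdivrMr // in hx2.
  case: (Hesc _ hx1') => [G0x|].
    by move: eG; rewrite G0x (a0 Ha) => /esym/eqP; rewrite mulf_eq0 gt_eqF //= expf_eq0 gt_eqF // andbF.
  rewrite (aD Ha) eG eF ltr_pdivlMr; last by rewrite mulr_gt0 // exprn_gt0.
  set p := a x ^+ size rF in pp hpow *.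
  set q := a x ^+ size rG in hpow *.
  move=> hh; nra.
have hrFd : size rF = d by move: hrFsz; rewrite hsF => -[].
rewrite hrFd in Fbig.
have pF := a_neq0 Ha lF0.
have [[U V] /= hUV] : exists u : {poly K} * {poly K}, u.1 * F + u.2 * G = 1.
  exact/Bezout_eq1_coprimepP.
set CU := \sum_(i < size U) a U`_i.
set CV := \sum_(i < size V) a V`_i.
have CU0 : 0 <= CU by apply: sumr_ge0 => i _; exact: (a_ge0 Ha).
have CV0 : 0 <= CV by apply: sumr_ge0 => i _; exact: (a_ge0 Ha).
set C := 1 + CU + CV.
have C0 : 0 < C by rewrite /C; lra.
have evalb : forall (P : {poly K}) x, a x <= 1 ->
    a P.[x] <= \sum_(i < size P) a P`_i.
  move=> P x hx; apply: (peval_le Ha (leqnn _)).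
    by apply: sumr_ge0 => i _; exact: (a_ge0 Ha).
  move=> i; apply: le_trans (sum_ge_term _ _) => //; last by move=> j; exact: (a_ge0 Ha).
  by apply: ler_piMr; [exact: (a_ge0 Ha) | rewrite exprn_ile1 // (a_ge0 Ha)].
set m := 1 / C.
have m0 : 0 < m by rewrite /m divr_gt0.
have Gbound : forall x, a x <= 1 -> a F.[x] <= a G.[x] -> m <= a G.[x].
  move=> x hx hFG.
  have := congr1 (fun p => p.[x]) hUV; rewrite /= hornerD !hornerM hornerC => e1.
  have : a 1 <= C * a G.[x].
    rewrite -e1; apply: (aD_le Ha); rewrite (aM Ha).
      have := evalb U x hx; have := a_ge0 Ha F.[x]; have := a_ge0 Ha G.[x].
      rewrite -/CU /C; nra.
    have := evalb V x hx; have := a_ge0 Ha F.[x]; have := a_ge0 Ha G.[x].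
    rewrite -/CV /C; nra.
  by rewrite (a1 Ha) /m ler_pdivrMr // mulrC.
set mm := Num.min (a (lead_coef F)) (Num.min m (gamma * m)).
have mm0 : 0 < mm by rewrite /mm !lt_min pF m0 mulr_gt0.
have mmF : mm <= a (lead_coef F) by rewrite /mm ge_min lexx.
have mmm : mm <= m by rewrite /mm ge_min; apply/orP; right; rewrite ge_min lexx.
have mmg : mm <= gamma * m by rewrite /mm ge_min; apply/orP; right; rewrite ge_min lexx orbT.
set e := mm / 2.
have e0 : 0 < e by rewrite /e; lra.
have eF : e < a (lead_coef F) by rewrite /e; lra.
have em : e < m by rewrite /e; lra.
have eg : e < gamma * m by rewrite /e; lra.
exists (fun F' G' : {poly K} => exists c : K, [/\ c != 0, (size (c *: F') <= d.+1)%N,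
   (size (c *: G') <= d.+1)%N & forall i : 'I_d.+1,
   a ((c *: F')`_i - F`_i) < e /\ a ((c *: G')`_i - G`_i) < e]).
split.
- split.
  + move=> c0 F1 G1 c00 [c [c0' s1 s2 h]]; exists (c / c0).
    rewrite !scalerA divfK //; split => //.
    by rewrite mulf_neq0 // invr_neq0.
  + move=> F1 G1 [c [c0 s1 s2 h]].
    have ac0 := a_neq0 Ha c0.
    exists (e / a c); first by rewrite divr_gt0.
    move=> F2 G2 s1' s2' h2; exists c; split => //.
    * exact: leq_trans (size_scale_leq _ _) s1'.
    * exact: leq_trans (size_scale_leq _ _) s2'.
    * move=> i; have [h1a h1b] := h i; have [h2a h2b] := h2 i.
      rewrite !coefZ in h1a h1b *.
      rewrite ltr_pdivlMr // mulrC in h2a.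
      rewrite ltr_pdivlMr // mulrC in h2b.
      split.
        rewrite (_ : c * F2`_i - F`_i = c * (F2`_i - F1`_i) + (c * F1`_i - F`_i)); last by ring.
        by apply: (aD_lt Ha) => //; rewrite (aM Ha).
      rewrite (_ : c * G2`_i - G`_i = c * (G2`_i - G1`_i) + (c * G1`_i - G`_i)); last by ring.
      by apply: (aD_lt Ha) => //; rewrite (aM Ha).
- exists 1; rewrite !scale1r; split => //; first exact: oner_neq0.
  by move=> i; rewrite !subrr (a0 Ha).
move=> F' G' _ [c [c0 s1 s2 h]].
set P := c *: F' in s1 h; set Q := c *: G' in s2 h.
have trQ : forall x, (Q.[x] == 0) = (G'.[x] == 0).
  by move=> x; rewrite /Q hornerZ mulf_eq0 (negbTE c0).
have trD : forall x, P.[x] / Q.[x] = F'.[x] / G'.[x].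
  by move=> x; rewrite /P /Q !hornerZ scale_div.
have szPF : (size (P - F)%R <= d.+1)%N.
  by apply: leq_trans (size_polyD _ _) _; rewrite size_polyN geq_max s1 hFsz.
have szQG : (size (Q - G)%R <= d.+1)%N.
  by apply: leq_trans (size_polyD _ _) _; rewrite size_polyN geq_max s2 hGsz.
have small1 : forall (S T : {poly K}), (size (S - T)%R <= d.+1)%N ->
    (forall i : 'I_d.+1, a (S`_i - T`_i) < e) ->
    forall x, a x <= 1 -> a (S.[x] - T.[x]) < e.
  move=> S T sz hc x hx; rewrite -hornerN -hornerD.
  apply: (peval_lt Ha sz e0) => i; rewrite coefB.
  apply: le_lt_trans (hc i).
  by apply: ler_piMr; [exact: (a_ge0 Ha) | rewrite exprn_ile1 // (a_ge0 Ha)].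
have small2 : forall (S T : {poly K}), (size (S - T)%R <= d.+1)%N ->
    (forall i : 'I_d.+1, a (S`_i - T`_i) < e) ->
    forall x, 1 < a x -> a (S.[x] - T.[x]) < e * a x ^+ d.
  move=> S T sz hc x hx; rewrite -hornerN -hornerD.
  have pd : 0 < a x ^+ d by rewrite exprn_gt0 // (lt_trans ltr01 hx).
  apply: (peval_lt Ha sz); first by rewrite mulr_gt0.
  move=> i; rewrite coefB.
  apply: (@le_lt_trans _ _ (a (S`_i - T`_i) * a x ^+ d)).
    by apply: ler_wpM2l; [exact: (a_ge0 Ha) | rewrite ler_eXn2l // -ltnS].
  by rewrite ltr_pM2r //; exact: (hc i).
have hPF : forall i : 'I_d.+1, a (P`_i - F`_i) < e by move=> i; case: (h i).
have hQG : forall i : 'I_d.+1, a (Q`_i - G`_i) < e by move=> i; case: (h i).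
split.
- move=> x hx.
  have pd : 0 < a x ^+ d by rewrite exprn_gt0 // (lt_trans ltr01 hx).
  have eFx := Fbig x hx.
  have aF0 : 0 < a F.[x] by rewrite eFx mulr_gt0.
  have hGF : a G.[x] < a F.[x].
    case: (Hesc _ hx) => [->|]; first by rewrite (a0 Ha).
    have [G0x|G0x] := eqVneq G.[x] 0; first by rewrite G0x (a0 Ha).
    have := a_neq0 Ha G0x => pg.
    by rewrite (aD Ha) ltr_pdivlMr // mul1r.
  have hPFx := small2 _ _ szPF hPF x hx.
  have hQGx := small2 _ _ szQG hQG x hx.
  have eFd : e * a x ^+ d < a F.[x] by rewrite eFx ltr_pM2r.
  have hFP : a F.[x] <= a P.[x].
    apply: (a_stable Ha); rewrite -opprB (aN Ha); exact: lt_trans hPFx eFd.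
  have hQ : a Q.[x] < a F.[x].
    rewrite -(subrK G.[x] Q.[x]); apply: (aD_lt Ha) => //; exact: lt_trans hQGx eFd.
  have [Q0|Q0] := eqVneq Q.[x] 0; first by left; apply/eqP; rewrite -trQ Q0.
  right; rewrite -trD (aD Ha).
  have pq := a_neq0 Ha Q0.
  rewrite ltr_pdivlMr // mul1r; exact: lt_le_trans hQ hFP.
- move=> x [Gx0 hle].
  have hx : a x <= 1.
    rewrite leNgt; apply/negP => hx; case: (Hesc _ hx) => [/eqP|]; first by rewrite (negbTE Gx0).
    by rewrite ltNge hle.
  have pg := a_neq0 Ha Gx0.
  have hFG : a F.[x] <= a G.[x] by move: hle; rewrite (aD Ha) ler_pdivrMr // mul1r.
  have hGm := Gbound x hx hFG.
  have hPFx := small1 _ _ szPF hPF x hx.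
  have hQGx := small1 _ _ szQG hQG x hx.
  have hGQ : a G.[x] <= a Q.[x].
    apply: (a_stable Ha); rewrite -opprB (aN Ha).
    by apply: lt_le_trans hQGx _; apply: le_trans (ltW em) hGm.
  have Q0 : Q.[x] != 0 by apply/eqP => Q0; move: hGQ; rewrite Q0 (a0 Ha) leNgt pg.
  split; first by rewrite -trQ.
  rewrite -trD.
  have -> : P.[x] / Q.[x] - F.[x] / G.[x] =
      ((P.[x] - F.[x]) * G.[x] + - (F.[x] * (Q.[x] - G.[x]))) / (Q.[x] * G.[x]).
    by field; apply/andP.
  have pq := a_neq0 Ha Q0.
  rewrite (aD Ha) (aM Ha) ltr_pdivrMr ?mulr_gt0 //.
  have hnum : a ((P.[x] - F.[x]) * G.[x] + - (F.[x] * (Q.[x] - G.[x]))) < e * a G.[x].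
    apply: (aD_lt Ha); rewrite ?(aN Ha) (aM Ha).
      by rewrite ltr_pM2r.
    have := a_ge0 Ha F.[x]; have := a_ge0 Ha (Q.[x] - G.[x]); nra.
  have h1 : e * a G.[x] < gamma * m * a G.[x] by rewrite ltr_pM2r.
  have h2 : gamma * m <= gamma * a Q.[x] by rewrite ler_pM2l // (le_trans hGm hGQ).
  have h3 : gamma * m * a G.[x] <= gamma * a Q.[x] * a G.[x] by rewrite ler_pM2r.
  rewrite mulrA; exact: lt_trans hnum (lt_le_trans h1 h3).
Qed.
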